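(* Let $V$ be a complex vector space with basis $\{v_i:i\in\mathbb{Z}\}$ and let $\mathbf{a}\in\mathbb{C}^{\mathbb{Z}}$ be not generic. Then $\mathbf{a}^\perp$ is a subspace of $V$ of finite codimension $m$, where $m$ is the minimal non-negative integer for which there exists a non-zero $v\in\mathbf{a}^\perp$ with $\omega(v)=m$. Moreover, for such a $v$ (with $\omega(v)=m$), the collection of all $\mathbb{Z}$-translates of $v$ is a basis of $\mathbf{a}^\perp$, and this basis extended by $v_0,v_1,\dots,v_{m-1}$ (an empty list if $m=0$) is a basis of $V$.
   Context: $\mathbb{C}^{\mathbb{Z}}$ is identified with the dual $V^*$: $\mathbf{a}=(a_i)$ corresponds to the functional $v_i\mapsto a_i$; write $\langle\mathbf{a},v\rangle$ for the evaluation. $\mathbb{Z}$ acts on $V$ by $n\cdot v_i=v_{i+n}$ and on $\mathbb{C}^{\mathbb{Z}}$ by $n\cdot(a_i)_i=(a_{i+n})_i$; write $x^{(n)}=n\cdot x$ ($\mathbb{Z}$-translates). An element $\mathbf{a}$ is generic if the multiset of all its $\mathbb{Z}$-translates is linearly independent. $\mathbf{a}^\perp=\{v\in V:\langle\mathbf{a},v^{(i)}\rangle=0\text{ for all }i\in\mathbb{Z}\}$. For non-zero $v=\sum_i c_iv_i\in V$, $l(v)=\min\{i:c_i\neq0\}$, $r(v)=\max\{i:c_i\neq0\}$ and $\omega(v)=r(v)-l(v)$. *)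

(* Defs.v *)
From HB Require Import structures.
From mathcomp Require Import all_boot all_order all_algebra.
From mathcomp Require Import boolp classical_sets fsbigop reals.
From mathcomp Require Import complex.
Set Implicit Arguments. Unset Strict Implicit. Unset Printing Implicit Defensive.
Import Order.TTheory GRing.Theory Num.Theory.
Local Open Scope ring_scope.

Section Defs.
Variable R : realType.
Local Notation C := R[i].

(* elements of C^Z / coefficient functions of vectors of V *)
Definition cseq := int -> C.

(* V : v = sum_i c_i v_i, represented by its coefficient function, which has
   finite support *)
Definition inV (v : cseq) : Prop :=
  exists N : nat, forall i : int, (N < `|i|)%N -> v i = 0.

(* translation on V : n . v_i = v_(i+n), hence coefficient at j is c_(j-n) *)
Definition shiftV (n : int) (v : cseq) : cseq := fun j => v (j - n).
Definition shiftA (n : int) (a : cseq) : cseq := fun i => a (i + n).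

(* the evaluation <a, v> = sum_i a_i c_i (finite sum since v is in V) *)
Definition pairing (a v : cseq) : C := (\sum_(i \in [set: int]) (a i * v i))%R.

Definition basisV (i : int) : cseq := fun j => if j == i then 1 else 0.

Definition lincomb (I : Type) (f : I -> cseq) (s : seq I) (c : I -> C) : cseq :=
  fun j => \sum_(k <- s) c k * f k j.

(* linear independence of a family (as a multiset: repetitions make it dependent) *)
Definition lin_indep (I : eqType) (f : I -> cseq) : Prop :=
  forall (s : seq I) (c : I -> C), uniq s ->
    lincomb f s c = (fun _ => 0) -> forall k, k \in s -> c k = 0.

Definition in_span (I : Type) (f : I -> cseq) (w : cseq) : Prop :=
  exists (s : seq I) (c : I -> C), w = lincomb f s c.

Definition is_basis (I : eqType) (f : I -> cseq) (S : cseq -> Prop) : Prop :=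
  [/\ forall k, S (f k), lin_indep f & forall w, S w -> in_span f w].

Definition generic (a : cseq) : Prop := lin_indep (fun n : int => shiftA n a).

Definition perp (a : cseq) (v : cseq) : Prop :=
  inV v /\ forall i : int, pairing a (shiftV i v) = 0.

Definition is_subspace (S : cseq -> Prop) : Prop :=
  [/\ forall v, S v -> inV v, S (fun _ => 0),
      forall v w, S v -> S w -> S (fun j => v j + w j)
    & forall (c : C) v, S v -> S (fun j => c * v j)].

(* S has codimension m in V: dim (V / S) = m, i.e. there are m vectors whose
   classes modulo S form a basis of V / S *)
Definition codim (S : cseq -> Prop) (m : nat) : Prop :=
  exists u : 'I_m -> cseq,
    [/\ forall k, inV (u k),
        forall c : 'I_m -> C, S (lincomb u (enum 'I_m) c) -> forall k, c k = 0
      & forall v, inV v -> exists (c : 'I_m -> C) (w : cseq),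
          S w /\ v = (fun j => w j + lincomb u (enum 'I_m) c j)].

(* for non-zero v: omega(v) = r(v) - l(v) = m, where l(v) (resp. r(v)) is the
   least (resp. largest) index with non-zero coefficient *)
Definition omega_eq (v : cseq) (m : nat) : Prop :=
  exists l : int, [/\ v l != 0, v (l + m%:Z) != 0 &
    forall i : int, (i < l) || (l + m%:Z < i) -> v i = 0].

Definition nonzero (v : cseq) : Prop := exists i, v i != 0.

End Defs.

(* Main.v *)
Require Import Defs.
From HB Require Import structures.
From mathcomp Require Import all_boot all_order all_algebra.
From mathcomp Require Import boolp classical_sets fsbigop reals.
From mathcomp Require Import complex.
From mathcomp Require Import zify.
Import Order.TTheory GRing.Theory Num.Theory.
Local Open Scope ring_scope.

Set Implicit Arguments. Unset Strict Implicit. Unset Printing Implicit Defensive.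

Section Aux.
Variable R : realType.
Local Notation C := R[i].
Local Notation cs := (int -> C).

Definition W (N : nat) : seq int :=
  [seq Posz i | i <- iota 0 N.+1] ++ [seq Negz i | i <- iota 0 N].

Lemma memW N i : (i \in W N) = (`|i|%N <= N)%N.
Proof.
case: i => n; rewrite mem_cat.
- rewrite mem_map; last by move=> x y [].
  rewrite mem_iota add0n ltnS /=.
  have -> : (Posz n \in [seq Negz i | i <- iota 0 N]) = false.
    by apply/mapP => -[].
  by rewrite orbF.
- have -> : (Negz n \in [seq Posz i | i <- iota 0 N.+1]) = false.
    by apply/mapP => -[].
  rewrite mem_map; last by move=> x y [].
  by rewrite mem_iota add0n.
Qed.

Lemma uniqW N : uniq (W N).
Proof.
rewrite cat_uniq !map_inj_uniq ?iota_uniq ?andbT //=; try by move=> x y [].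
apply/hasP => -[x /mapP [y _ ->]]; rewrite inE => /orP [//|/mapP [z _] //].
Qed.

Lemma fsumE (f : cs) (r : seq int) : uniq r ->
  (forall i, i \notin r -> f i = 0) ->
  \sum_(i \in [set: int]) f i = \sum_(i <- r) f i.
Proof.
move=> ur fr; rewrite (fsbigE r) //; last by move=> i _; apply: fr.
by apply: eq_bigl => i; rewrite in_setT.
Qed.

Definition bnd N (v : cs) := forall i, (N < `|i|)%N -> v i = 0.

Lemma fsumW (f : cs) N : bnd N f ->
  \sum_(i \in [set: int]) f i = \sum_(i <- W N) f i.
Proof.
move=> fN; apply: fsumE; first exact: uniqW.
by move=> i; rewrite memW -ltnNge; apply: fN.
Qed.

Lemma bnd_le N N' v : (N <= N')%N -> bnd N v -> bnd N' v.
Proof. by move=> le b i h; apply: b; lia. Qed.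

Lemma inV_bnd (v : cs) : inV v -> exists N, bnd N v.
Proof. by []. Qed.

Lemma inV0 : @inV R (fun _ => 0).
Proof. by exists 0%N. Qed.

Lemma inV_add (v w : cs) : inV v -> inV w -> inV (fun j => v j + w j).
Proof.
move=> [N1 b1] [N2 b2]; exists (maxn N1 N2) => i h.
by rewrite b1 ?b2 ?addr0 //; lia.
Qed.

Lemma inV_scale k (v : cs) : inV v -> inV (fun j => k * v j).
Proof. by move=> [N b]; exists N => i h; rewrite b ?mulr0. Qed.

Lemma inV_shift n (v : cs) : inV v -> inV (shiftV n v).
Proof.
move=> [N b]; exists (N + `|n|)%N => i h; rewrite /shiftV b //; lia.
Qed.

Lemma inV_basis (n : int) : inV (basisV R n).
Proof.
exists `|n|%N => i h; rewrite /basisV; case: eqP => // e.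
by move: h; rewrite e ltnn.
Qed.

Lemma inV_delta (n : int) (k : C) : inV (fun i => if i == n then k else 0).
Proof.
exists `|n|%N => i h; case: eqP => // e.
by move: h; rewrite e ltnn.
Qed.

Lemma pairingW (a v : cs) N : bnd N v -> pairing a v = \sum_(i <- W N) a i * v i.
Proof. by move=> b; apply: fsumW => i h; rewrite b ?mulr0. Qed.

Lemma pairingD (a v w : cs) : inV v -> inV w ->
  pairing a (fun j => v j + w j) = pairing a v + pairing a w.
Proof.
move=> [N1 b1] [N2 b2].
have b1' := bnd_le (leq_maxl N1 N2) b1.
have b2' := bnd_le (leq_maxr N1 N2) b2.
have b3 : bnd (maxn N1 N2) (fun j => v j + w j).
  by move=> i h; rewrite b1' ?b2' ?addr0.
rewrite (pairingW _ b1') (pairingW _ b2') (pairingW _ b3) -big_split /=.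
by apply: eq_bigr => i _; rewrite mulrDr.
Qed.

Lemma pairingZ (a v : cs) k : inV v ->
  pairing a (fun j => k * v j) = k * pairing a v.
Proof.
move=> [N b].
have b' : bnd N (fun j => k * v j) by move=> i h; rewrite b ?mulr0.
rewrite (pairingW _ b) (pairingW _ b') mulr_sumr.
by apply: eq_bigr => i _; rewrite mulrCA.
Qed.

Lemma pairing0 (a : cs) : pairing a (fun _ => 0) = 0.
Proof. by rewrite (@pairingW _ _ 0%N) // big1 // => i _; rewrite mulr0. Qed.

Lemma perp0 (a : cs) : perp a (fun _ => 0).
Proof. by split; [exact: inV0| move=> i; exact: pairing0]. Qed.

Lemma perpD (a v w : cs) : perp a v -> perp a w -> perp a (fun j => v j + w j).
Proof.
move=> [Vv Pv] [Vw Pw]; split; first exact: inV_add.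
move=> i; rewrite /shiftV (pairingD _ (inV_shift i Vv) (inV_shift i Vw)).
by rewrite Pv Pw addr0.
Qed.

Lemma perpZ (a v : cs) k : perp a v -> perp a (fun j => k * v j).
Proof.
move=> [Vv Pv]; split; first exact: inV_scale.
by move=> i; rewrite /shiftV (pairingZ _ _ (inV_shift i Vv)) Pv mulr0.
Qed.

Lemma perp_sub (a : cs) : is_subspace (perp a).
Proof.
split; [by move=> v []| exact: perp0| exact: perpD| by move=> *; exact: perpZ].
Qed.

Lemma shiftVK (v : cs) i n : shiftV i (shiftV n v) = shiftV (i + n) v.
Proof. by apply: funext => j; rewrite /shiftV; congr v; lia. Qed.

Lemma perp_shift (a v : cs) n : perp a v -> perp a (shiftV n v).
Proof.
move=> [Vv Pv]; split; first exact: inV_shift.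
by move=> i; rewrite shiftVK.
Qed.

Lemma perp_lincomb (a p : cs) (s : seq int) (c : cs) :
  perp a p -> perp a (lincomb (fun n => shiftV n p) s c).
Proof.
move=> Pp; elim: s => [|x s IH].
  have -> : lincomb (fun n => shiftV n p) [::] c = (fun _ => 0).
    by apply: funext => j; rewrite /lincomb big_nil.
  exact: perp0.
have -> : lincomb (fun n => shiftV n p) (x :: s) c =
  (fun j => c x * shiftV x p j + lincomb (fun n => shiftV n p) s c j).
  by apply: funext => j; rewrite /lincomb big_cons.
apply: perpD => //; apply: perpZ; exact: perp_shift.
Qed.

Lemma omega_ex (v : cs) : inV v -> nonzero v -> exists k, omega_eq v k.
Proof.
move=> [N bN] [i0 vi0].
have bi0 : (`|i0| <= N)%N.
  rewrite leqNgt; apply/negP => h; by move: vi0; rewrite bN // eqxx.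
pose P j := (j <= N.*2)%N && (v (j%:Z - N%:Z) != 0).
have exP : exists j, P j.
  exists (absz (i0 + N%:Z)); rewrite /P.
  have -> : ((absz (i0 + N%:Z)))%:Z - N%:Z = i0 by lia.
  rewrite vi0 andbT; lia.
have ub : forall j, P j -> (j <= N.*2)%N by move=> j /andP[].
case: (ex_minnP exP) => lo /andP [lo_le vlo] lo_min.
case: (ex_maxnP exP ub) => hi /andP [hi_le vhi] hi_max.
have lohi : (lo <= hi)%N by apply: lo_min; rewrite /P hi_le.
exists (hi - lo)%N, (lo%:Z - N%:Z); split => //.
  by have -> : lo%:Z - N%:Z + (hi - lo)%N%:Z = hi%:Z - N%:Z by lia.
move=> i hi0; apply/eqP; apply: contraT => vi.
have bi : (`|i| <= N)%N.
  rewrite leqNgt; apply/negP => h; by move: vi; rewrite bN // eqxx.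
have Pj : P (absz (i + N%:Z)).
  rewrite /P; have -> : ((absz (i + N%:Z)))%:Z - N%:Z = i by lia.
  rewrite vi andbT; lia.
have := lo_min _ Pj; have := hi_max _ Pj; move: hi0; lia.
Qed.

Lemma seq_max (S : seq int) : S != [::] ->
  exists2 x, x \in S & forall y, y \in S -> y <= x.
Proof.
elim: S => [//|x S IH] _.
case: (eqVneq S [::]) => [->|ne].
  by exists x; rewrite ?mem_seq1 // => y; rewrite mem_seq1 => /eqP ->.
case: (IH ne) => y yS Hy.
case: (lerP x y) => h.
  exists y; first by rewrite inE yS orbT.
  by move=> z; rewrite inE => /orP [/eqP ->|/Hy].
exists x; first by rewrite inE eqxx.
move=> z; rewrite inE => /orP [/eqP ->//|/Hy]; move: h; lia.
Qed.

Lemma nat_min (Q : nat -> Prop) : (exists k, Q k) ->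
  exists m, Q m /\ forall k, Q k -> (m <= k)%N.
Proof.
move=> [k Qk].
have exP : exists n, `[< Q n >] by exists k; apply/asboolP.
case: (ex_minnP exP) => m /asboolP Qm Hm.
by exists m; split => // k' Qk'; apply: Hm; apply/asboolP.
Qed.

End Aux.

Section Main.
Variable R : realType.
Local Notation C := R[i].
Local Notation cs := (int -> C).
Variables (a p : cs) (l : int) (m : nat).
Hypothesis Hp : perp a p.
Hypothesis Hl : p l != 0.
Hypothesis Hr : p (l + m%:Z) != 0.
Hypothesis Hz : forall i, (i < l) || (l + m%:Z < i) -> p i = 0.
Hypothesis Hmin : forall (w : cs) (k : nat), perp a w -> nonzero w -> omega_eq w k -> (m <= k)%N.

Lemma Vp : inV p. Proof. by case: Hp. Qed.

Lemma small_zero (r : cs) : perp a r ->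
  (forall j, (j < 0) || (m%:Z <= j) -> r j = 0) -> forall j, r j = 0.
Proof.
move=> Pr Hr0 j; apply/eqP; apply: contraT => rj.
have nz : nonzero r by exists j.
case: (omega_ex Pr.1 nz) => k Ok; case: (Ok) => l' [h1 h2 _].
have H1 : ~~ ((l' < 0) || (m%:Z <= l')).
  by apply: contra h1 => /Hr0 ->; rewrite eqxx.
have H2 : ~~ ((l' + k%:Z < 0) || (m%:Z <= l' + k%:Z)).
  by apply: contra h2 => /Hr0 ->; rewrite eqxx.
have := Hmin Pr nz Ok; move: H1 H2; lia.
Qed.

Lemma shift_indep (s : seq int) (c : cs) : uniq s ->
  (forall j, lincomb (fun n => shiftV n p) s c j = 0) ->
  forall k, k \in s -> c k = 0.
Proof.
move=> us H k ks; apply/eqP; apply: contraT => ck.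
pose S := [seq n <- s | c n != 0].
have neS : S != [::].
  apply/eqP => e; have : k \in S by rewrite mem_filter ck ks.
  by rewrite e.
case: (seq_max neS) => x; rewrite mem_filter => /andP [cx xs] Hx.
have := H (l + m%:Z + x); rewrite /lincomb (bigD1_seq x) //= big1_seq.
  rewrite addr0 /shiftV => /eqP; rewrite mulf_eq0 (negbTE cx) /=.
  have -> : l + m%:Z + x - x = l + m%:Z by lia.
  by rewrite (negbTE Hr).
move=> y /andP [yx ys]; case: (eqVneq (c y) 0) => [->|cy]; first by rewrite mul0r.
have : y <= x by apply: Hx; rewrite mem_filter cy ys.
move=> yle; rewrite /shiftV Hz ?mulr0 //; move: yx yle; lia.
Qed.

Definition comb (c : cs) : cs :=
  fun j => \sum_(n \in [set: int]) c n * shiftV n p j.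

Lemma combW (c : cs) N : bnd N c -> comb c = lincomb (fun n => shiftV n p) (W N) c.
Proof.
move=> b; apply: funext => j; rewrite /comb /lincomb (@fsumW _ _ N) // => i h.
by rewrite b ?mul0r.
Qed.

Lemma comb_perp (c : cs) : inV c -> perp a (comb c).
Proof. by move=> [N b]; rewrite (combW b); apply: perp_lincomb. Qed.

Lemma combD (c1 c2 : cs) : inV c1 -> inV c2 -> forall j,
  comb (fun i => c1 i + c2 i) j = comb c1 j + comb c2 j.
Proof.
move=> [N1 b1] [N2 b2] j.
have b1' := bnd_le (leq_maxl N1 N2) b1.
have b2' := bnd_le (leq_maxr N1 N2) b2.
have b3 : bnd (maxn N1 N2) (fun j => c1 j + c2 j).
  by move=> i h; rewrite b1' ?b2' ?addr0.
rewrite (combW b1') (combW b2') (combW b3) /lincomb -big_split /=.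
by apply: eq_bigr => i _; rewrite mulrDl.
Qed.

Lemma comb_delta n k j : comb (fun i => if i == n then k else 0) j = k * shiftV n p j.
Proof.
rewrite /comb (@fsumE _ _ [:: n]) // ?big_seq1 ?eqxx //.
by move=> i; rewrite mem_seq1 => /negbTE ->; rewrite mul0r.
Qed.

Lemma comb0 j : comb (fun _ => 0) j = 0.
Proof. by rewrite /comb fsbig1 // => i _; rewrite mul0r. Qed.

Lemma up K : forall w : cs, inV w -> (forall j, m%:Z + K%:Z <= j -> w j = 0) ->
  exists c, inV c /\ exists w'', [/\ inV w'', (forall j, m%:Z <= j -> w'' j = 0)
     & forall j, w j = comb c j + w'' j].
Proof.
elim: K => [|K IH] w Vw Hw.
  exists (fun _ => 0); split; first exact: inV0.
  exists w; split => //; first by move=> j h; apply: Hw; lia.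
  by move=> j; rewrite comb0 add0r.
pose B := m%:Z + K%:Z.
pose k := w B / p (l + m%:Z).
pose n := B - l - m%:Z.
pose w' := fun j => w j + (- k) * shiftV n p j.
have Vw' : inV w' by apply: inV_add => //; apply: inV_scale; apply: inV_shift; exact: Vp.
have Hw' : forall j, m%:Z + K%:Z <= j -> w' j = 0.
  move=> j hj; rewrite /w' /shiftV.
  case: (eqVneq j B) => [->|jB].
    have -> : B - n = l + m%:Z by rewrite /n; lia.
    by rewrite mulNr divfK // subrr.
  rewrite Hw; last by move: hj jB; rewrite /B; lia.
  by rewrite Hz ?mulr0 ?addr0 //; move: hj jB; rewrite /n /B; lia.
case: (IH w' Vw' Hw') => c [Vc [w'' [Vw'' H1 H2]]].
exists (fun i => c i + (if i == n then k else 0)); split.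
  by apply: inV_add => //; apply: inV_delta.
exists w''; split => // j.
rewrite combD //; last by apply: inV_delta.
rewrite comb_delta; have := H2 j; rewrite /w'.
by move/eqP; rewrite mulNr subr_eq => /eqP ->; rewrite addrAC.
Qed.

Lemma down K : forall w : cs, inV w -> (forall j, m%:Z <= j -> w j = 0) ->
  (forall j, j < - K%:Z -> w j = 0) ->
  exists c, inV c /\ exists r, (forall j, (j < 0) || (m%:Z <= j) -> r j = 0)
     /\ forall j, w j = comb c j + r j.
Proof.
elim: K => [|K IH] w Vw Hw Hw2.
  exists (fun _ => 0); split; first exact: inV0.
  exists w; split; last by move=> j; rewrite comb0 add0r.
  by move=> j /orP [h|h]; [apply: Hw2; lia| apply: Hw].
pose A := - K.+1%:Z.
pose k := w A / p l.
pose n := A - l.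
pose w' := fun j => w j + (- k) * shiftV n p j.
have Vw' : inV w' by apply: inV_add => //; apply: inV_scale; apply: inV_shift; exact: Vp.
have Hwa : forall j, m%:Z <= j -> w' j = 0.
  move=> j hj; rewrite /w' /shiftV Hw // Hz ?mulr0 ?addr0 //.
  by rewrite /n /A; lia.
have Hwb : forall j, j < - K%:Z -> w' j = 0.
  move=> j hj; rewrite /w' /shiftV.
  case: (eqVneq j A) => [->|jA].
    have -> : A - n = l by rewrite /n; lia.
    by rewrite mulNr divfK // subrr.
  rewrite Hw2; last by move: hj jA; rewrite /A; lia.
  by rewrite Hz ?mulr0 ?addr0 //; move: hj jA; rewrite /n /A; lia.
case: (IH w' Vw' Hwa Hwb) => c [Vc [r [H1 H2]]].
exists (fun i => c i + (if i == n then k else 0)); split.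
  by apply: inV_add => //; apply: inV_delta.
exists r; split => // j.
rewrite combD //; last by apply: inV_delta.
rewrite comb_delta; have := H2 j; rewrite /w'.
by move/eqP; rewrite mulNr subr_eq => /eqP ->; rewrite addrAC.
Qed.

Lemma division (w : cs) : inV w ->
  exists c, inV c /\ exists r, (forall j, (j < 0) || (m%:Z <= j) -> r j = 0)
     /\ forall j, w j = comb c j + r j.
Proof.
move=> Vw; case: (Vw) => N bN.
have := @up N.+1 w Vw; case.
  by move=> j hj; apply: bN; lia.
move=> c1 [Vc1 [w'' [Vw'' H1 H2]]].
case: (Vw'') => N2 b2.
have := @down N2 w'' Vw'' H1; case.
  by move=> j hj; apply: b2; lia.
move=> c2 [Vc2 [r [H3 H4]]].
exists (fun i => c1 i + c2 i); split; first exact: inV_add.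
exists r; split => // j.
by rewrite combD // H2 H4 addrA.
Qed.


Lemma basis1 : is_basis (fun n : int => shiftV n p) (perp a).
Proof.
split.
- by move=> k; apply: perp_shift.
- move=> s c us H k ks; apply: (shift_indep us) => // j.
  by rewrite H.
- move=> w Pw; case: (division Pw.1) => c [Vc [r [Hr0 Hw]]].
  have Pr : perp a r.
    have -> : r = (fun j => w j + (-1) * comb c j).
      by apply: funext => j; rewrite Hw mulN1r addrC addKr.
    by apply: perpD => //; apply: perpZ; apply: comb_perp.
  have r0 := small_zero Pr Hr0.
  case: (Vc) => N b; exists (W N), c; rewrite -(combW b).
  by apply: funext => j; rewrite Hw r0 addr0.
Qed.

Definition bas (k : 'I_m) : cs := basisV R (nat_of_ord k)%:Z.

Lemma bas_supp (s : seq 'I_m) (d : 'I_m -> C) j : (j < 0) || (m%:Z <= j) ->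
  lincomb bas s d j = 0.
Proof.
move=> h; rewrite /lincomb big1 // => k _; rewrite /bas /basisV.
case: eqP => [e|_]; last by rewrite mulr0.
by move: h; rewrite e; have := ltn_ord k; lia.
Qed.

Lemma bas_at (s : seq 'I_m) (d : 'I_m -> C) (k : 'I_m) : uniq s -> k \in s ->
  lincomb bas s d (nat_of_ord k)%:Z = d k.
Proof.
move=> us ks; rewrite /lincomb (bigD1_seq k) //= big1_seq.
  by rewrite /bas /basisV eqxx mulr1 addr0.
move=> k' /andP [kk _]; rewrite /bas /basisV; case: eqP => [e|_]; last by rewrite mulr0.
have ek : k' = k by apply/val_inj; move: e => [/= ->].
by rewrite ek eqxx in kk.
Qed.

Lemma rexp (r : cs) : (forall j, (j < 0) || (m%:Z <= j) -> r j = 0) ->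
  r = lincomb bas (enum 'I_m) (fun k => r (nat_of_ord k)%:Z).
Proof.
move=> Hr0; apply: funext => j.
case: (boolP ((j < 0) || (m%:Z <= j))) => h.
  by rewrite Hr0 // bas_supp.
have jm : (absz j < m)%N by move: h; lia.
have -> : j = (nat_of_ord (Ordinal jm))%:Z by rewrite /=; move: h; lia.
by rewrite bas_at ?enum_uniq ?mem_enum.
Qed.

Definition getl (x : int + 'I_m) : option int := if x is inl n then Some n else None.
Definition getr (x : int + 'I_m) : option 'I_m := if x is inr k then Some k else None.

Lemma split_lincomb (s : seq (int + 'I_m)) (c : int + 'I_m -> C) j :
  lincomb (fun x : int + 'I_m => match x with
                      | inl n => shiftV n p
                      | inr k => basisV R (nat_of_ord k)%:Z
                      end) s c j =
  lincomb (fun n => shiftV n p) (pmap getl s) (fun n => c (inl n)) j +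
  lincomb bas (pmap getr s) (fun k => c (inr k)) j.
Proof.
elim: s => [|x s IH]; first by rewrite /lincomb !big_nil addr0.
rewrite /lincomb in IH *.
case: x => [n|k] /=; rewrite !big_cons IH.
  by rewrite addrA.
by rewrite addrCA.
Qed.

Lemma basis2 : is_basis (fun x : int + 'I_m =>
                      match x with
                      | inl n => shiftV n p
                      | inr k => basisV R (nat_of_ord k)%:Z
                      end) (@inV R).
Proof.
split.
- case=> [n|k]; [apply: inV_shift; exact: Vp| exact: inV_basis].
- move=> s c us H.
  pose L := lincomb (fun n => shiftV n p) (pmap getl s) (fun n => c (inl n)).
  pose Rr := lincomb bas (pmap getr s) (fun k => c (inr k)).
  have E : forall j, Rr j = (-1) * L j.
    move=> j; have := split_lincomb s c j; rewrite H /= -/L -/Rr => /eqP.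
    by rewrite eq_sym addrC addr_eq0 => /eqP ->; rewrite mulN1r.
  have PR : perp a Rr.
    have -> : Rr = (fun j => (-1) * L j) by apply: funext.
    by apply: perpZ; apply: perp_lincomb.
  have R0 := small_zero PR (fun j h => bas_supp _ _ h).
  have L0 : forall j, L j = 0.
    by move=> j; have := E j; rewrite R0 mulN1r => /eqP; rewrite eq_sym oppr_eq0 => /eqP.
  have ul : uniq (pmap getl s) by apply: (pmap_uniq (g := inl)) => // -[].
  have ur : uniq (pmap getr s) by apply: (pmap_uniq (g := inr)) => // -[].
  case=> [n|k] xs.
    apply: (shift_indep ul L0); rewrite mem_pmap; apply/mapP; by exists (inl n).
  have kr : k \in pmap getr s by rewrite mem_pmap; apply/mapP; exists (inr k).
  by have := R0 (nat_of_ord k)%:Z; rewrite /Rr bas_at.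
- move=> w Vw; case: (division Vw) => c [Vc [r [Hr0 Hw]]].
  case: (Vc) => N b.
  exists ([seq inl n | n <- W N] ++ [seq inr k | k <- enum 'I_m]).
  exists (fun x => match x with inl n => c n | inr k => r (nat_of_ord k)%:Z end).
  apply: funext => j; rewrite Hw (combW b) {1}(rexp Hr0) /lincomb [in RHS]big_cat !big_map.
  by [].
Qed.

Lemma codim_p : codim (perp a) m.
Proof.
exists bas; split.
- by move=> k; apply: inV_basis.
- move=> c Pc k.
  have R0 := small_zero Pc (fun j h => bas_supp _ _ h).
  by have := R0 (nat_of_ord k)%:Z; rewrite bas_at ?enum_uniq ?mem_enum.
- move=> v Vv; case: (division Vv) => c [Vc [r [Hr0 Hw]]].
  exists (fun k => r (nat_of_ord k)%:Z), (comb c); split; first exact: comb_perp.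
  by apply: funext => j; rewrite Hw -(rexp Hr0).
Qed.

End Main.


Unset Implicit Arguments.
Set Strict Implicit.

Lemma nongen_vec (R : realType) (a : int -> R[i]) : ~ generic a ->
  exists v, [/\ perp a v, nonzero v & exists k, omega_eq v k].
Proof.
move=> ng.
case: (pselect (exists (s : seq int) (c : int -> R[i]), [/\ uniq s,
   lincomb (fun n : int => shiftA n a) s c = (fun _ => 0)
   & exists2 k, k \in s & c k != 0])); last first.
  move=> H; exfalso; apply: ng => s c us E k ks; case: (eqVneq (c k) 0) => // ck.
  by exfalso; apply: H; exists s, c; split => //; exists k.
move=> [s [c [us E [k ks ck]]]].
pose v := fun n => if n \in s then c n else 0.
have Vv : inV v.
  exists (\max_(x <- s) `|x|)%N => n h; rewrite /v; case: ifP => // ns.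
  have /= := @leq_bigmax_seq int s xpredT (fun x : int => `|x|%N) n ns isT; lia.
have nzv : nonzero v by exists k; rewrite /v ks.
have Pv : perp a v.
  split => // i.
  rewrite /pairing (@fsumE _ _ [seq n + i | n <- s]).
  - rewrite big_map; transitivity (lincomb (fun n => shiftA n a) s c i); last by rewrite E.
    rewrite /lincomb; apply: eq_big_seq => n ns; rewrite /shiftV /shiftA addrK /v ns mulrC.
    by rewrite addrC.
  - by rewrite map_inj_uniq // => x y /addIr.
  - move=> j jr; rewrite /shiftV /v; case: ifP => [js|_]; last by rewrite mulr0.
    have jin : j \in [seq n + i | n <- s] by apply/mapP; exists (j - i) => //; rewrite subrK.
    by rewrite jin in jr.
by exists v; split => //; apply: omega_ex.
Qed.

Theorem lemma2p3 (R : realType) (a : int -> R[i]) :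
  ~ generic a ->
  is_subspace (perp a) /\
  exists m : nat,
    [/\ exists v, [/\ perp a v, nonzero v & omega_eq v m],
        forall (w : int -> R[i]) (k : nat),
          perp a w -> nonzero w -> omega_eq w k -> (m <= k)%N,
        codim (perp a) m
      & forall v : int -> R[i], perp a v -> nonzero v -> omega_eq v m ->
          is_basis (fun n : int => shiftV n v) (perp a) /\
          is_basis (fun x : int + 'I_m =>
                      match x with
                      | inl n => shiftV n v
                      | inr k => basisV R (nat_of_ord k)%:Z
                      end) (@inV R)].
Proof.
move=> ng; split; first exact: perp_sub.
case: (@nongen_vec R a ng) => v0 [P0 N0 [k0 O0]].
have [m [Qm Hm]] := @nat_min (fun k => exists w, [/\ perp a w, nonzero w & omega_eq w k])
  (ex_intro _ k0 (ex_intro _ v0 (And3 P0 N0 O0))).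
have Hmin : forall (w : int -> R[i]) (k : nat),
    perp a w -> nonzero w -> omega_eq w k -> (m <= k)%N.
  by move=> w k Pw Nw Ow; apply: Hm; exists w.
exists m; split => //.
- case: Qm => w [Pw Nw [l [h1 h2 h3]]].
  exact: (codim_p Pw h1 h2 h3 Hmin).
- move=> v Pv Nv [l [h1 h2 h3]]; split.
    exact: (basis1 Pv h1 h2 h3 Hmin).
  exact: (basis2 Pv h1 h2 h3 Hmin).
Qed.
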